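(* Let $\varphi\colon\mathcal{M}\to\mathcal{X}\subseteq\mathcal{E}$ be a smooth lift, where $\mathcal{M}$ is a smooth embedded submanifold of $\mathcal{E}'=\mathcal{E}_1\times\cdots\times\mathcal{E}_d$ (a product of Euclidean spaces) and $\varphi$ is defined on all of $\mathcal{E}'$ and is multilinear in its $d$ arguments. If $\mathcal{M}$ contains a point $(y_1,\dots,y_d)$ with $y_i=0$ for (at least) three indices $i$, and $0=\varphi(y_1,\dots,y_d)$ is not an isolated point of $\mathcal{X}$, then $\varphi$ does not satisfy ''2 $\Rightarrow$ 1'' at $(y_1,\dots,y_d)$.
   Context: $\mathcal{E}$ and $\mathcal{E}_i$ are finite-dimensional real inner product spaces; $\mathcal{X}=\varphi(\mathcal{M})$. Tangent cone $\mathrm{T}_x\mathcal{X}=\{\lim(x_i-x)/\tau_i: x_i\in\mathcal{X},\tau_i>0,\tau_i\to0\}$; $x$ is stationary for $f$ on $\mathcal{X}$ if $\langle\nabla f(x),v\rangle\ge0$ for all $v\in\mathrm{T}_x\mathcal{X}$. For $g=f\circ\varphi$, $y$ is 2-critical if $(g\circ c)'(0)=0$ and $(g\circ c)''(0)\ge0$ for all smooth curves $c$ in $\mathcal{M}$ with $c(0)=y$. ''2 $\Rightarrow$ 1'' at $y$: for every twice differentiable $f\colon\mathcal{E}\to\mathbb{R}$, if $y$ is 2-critical for $f\circ\varphi$ then $\varphi(y)$ is stationary for $f$ on $\mathcal{X}$. *)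

(* Defs.v *)
From HB Require Import structures.
From mathcomp Require Import all_boot all_order all_algebra.
From mathcomp Require Import all_classical all_reals all_analysis.
Set Implicit Arguments.
Unset Strict Implicit.
Unset Printing Implicit Defensive.
Import Order.TTheory GRing.Theory Num.Theory.
Import numFieldNormedType.Exports.
Local Open Scope classical_set_scope.
Local Open Scope ring_scope.

Section Defs.
Variable R : realType.

Fixpoint iterD {V W : normedModType R} (vs : seq V) (f : V -> W) : V -> W :=
  match vs with
  | [::] => f
  | v :: vs' => fun x => 'D_v (iterD vs' f) x
  end.

Definition smooth_on {V W : normedModType R} (U : set V) (f : V -> W) : Prop :=
  forall vs : seq V, forall x, U x ->
    {for x, continuous (iterD vs f)} /\ forall v : V, derivable (iterD vs f) x v.

(* smooth embedded submanifold of R^N (of codimension k), via local defining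
   functions: around each point p of M there is an open U and a smooth
   h : U -> R^k with Dh(p) surjective (rank k) and M \cap U = h^{-1}(0) \cap U *)
Definition embedded_submanifold (N : nat) (M : set 'rV[R]_N) : Prop :=
  exists k : nat, forall p, M p ->
    exists (U : set 'rV[R]_N) (h : 'rV[R]_N -> 'rV[R]_k),
      [/\ open U, U p, smooth_on U h,
          (forall w : 'rV[R]_k, exists v : 'rV[R]_N, 'D_v h p = w) &
          (forall x, U x -> (M x <-> h x = 0))].

(* E' = E_1 x ... x E_d is represented as R^N where coordinate j belongs to
   the factor blk j.  upd i y z replaces the i-th component of y by that of z. *)
Definition upd (N d : nat) (blk : 'I_N -> 'I_d) (i : 'I_d) (y z : 'rV[R]_N)
  : 'rV[R]_N := \row_j (if blk j == i then z 0 j else y 0 j).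

Definition block_zero (N d : nat) (blk : 'I_N -> 'I_d) (y : 'rV[R]_N) (i : 'I_d)
  : bool := [forall j, (blk j == i) ==> (y 0 j == 0)].

Definition multilinear (N d m : nat) (blk : 'I_N -> 'I_d)
  (phi : 'rV[R]_N -> 'rV[R]_m) : Prop :=
  forall (i : 'I_d) (y z1 z2 : 'rV[R]_N) (a : R),
    phi (upd blk i y (a *: z1 + z2)) =
      a *: phi (upd blk i y z1) + phi (upd blk i y z2).

Definition twice_differentiable (m : nat) (f : 'rV[R]_m -> R) : Prop :=
  (forall x, differentiable f x) /\
  (forall (v x : 'rV[R]_m), differentiable ('D_v f) x).

Definition tangent_cone (m : nat) (X : set 'rV[R]_m) (x : 'rV[R]_m)
  : set 'rV[R]_m := fun v =>
  exists (xs : nat -> 'rV[R]_m) (tau : nat -> R),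
    [/\ forall n, X (xs n), forall n, 0 < tau n,
        tau @ \oo --> (0 : R) &
        (fun n => (tau n)^-1 *: (xs n - x)) @ \oo --> v].

Definition stationary (m : nat) (f : 'rV[R]_m -> R) (X : set 'rV[R]_m)
  (x : 'rV[R]_m) : Prop :=
  forall v, tangent_cone X x v -> 0 <= 'd f x v.

Definition two_critical (N : nat) (g : 'rV[R]_N -> R) (M : set 'rV[R]_N)
  (y : 'rV[R]_N) : Prop :=
  forall c : R -> 'rV[R]_N,
    smooth_on setT c -> (forall t, M (c t)) -> c 0 = y ->
    derive1 (g \o c) 0 = 0 /\ 0 <= derive1 (derive1 (g \o c)) 0.

Definition two_implies_one (N m : nat) (phi : 'rV[R]_N -> 'rV[R]_m)
  (M : set 'rV[R]_N) (y : 'rV[R]_N) : Prop :=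
  forall f : 'rV[R]_m -> R, twice_differentiable f ->
    two_critical (f \o phi) M y -> stationary f (phi @` M) (phi y).

Definition not_isolated (m : nat) (X : set 'rV[R]_m) (x : 'rV[R]_m) : Prop :=
  forall U, nbhs x U -> exists z, [/\ X z, z != x & U z].

End Defs.

(* Main.v *)
Require Import Defs.
From HB Require Import structures.
From mathcomp Require Import all_boot all_order all_algebra.
From mathcomp Require Import all_classical all_reals all_analysis.
From mathcomp Require Import ring lra.
Import Order.TTheory GRing.Theory Num.Theory.
Import numFieldNormedType.Exports.
Local Open Scope classical_set_scope.
Local Open Scope ring_scope.

Set Implicit Arguments.
Unset Strict Implicit.

Section Sm.
Variable R : realType.
Implicit Types (f g u : R -> R) (t a : R).
Definition D (g : R -> R) : R -> R := fun t => 'D_1 g t.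

Fixpoint Sn (n : nat) (g : R -> R) : Prop :=
  match n with 0 => True | n.+1 => (forall t, derivable g t 1) /\ Sn n (D g) end.
Definition Sm g := forall n, Sn n g.
Fixpoint Z (k : nat) (g : R -> R) : Prop :=
  match k with 0 => Sm g | k.+1 => [/\ g 0 = 0, Sm g & Z k (D g)] end.

Lemma D_cst a : D (fun _ => a) = fun _ => 0.
Proof. by apply/funext => t; rewrite /D derive_cst. Qed.

Lemma D_add f g : (forall t, derivable f t 1) -> (forall t, derivable g t 1) ->
  D (fun t => f t + g t) = fun t => D f t + D g t.
Proof. move=> df dg; apply/funext => t; rewrite /D; exact: (deriveD (df t) (dg t)). Qed.

Lemma der_add f g t : derivable f t 1 -> derivable g t 1 ->
  derivable (fun t => f t + g t) t 1.
Proof. move=> df dg; exact: (derivableD df dg). Qed.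

Lemma D_mul f g : (forall t, derivable f t 1) -> (forall t, derivable g t 1) ->
  D (fun t => f t * g t) = fun t => f t * D g t + g t * D f t.
Proof. move=> df dg; apply/funext => t; rewrite /D; exact: (deriveM (df t) (dg t)). Qed.

Lemma der_mul f g t : derivable f t 1 -> derivable g t 1 ->
  derivable (fun t => f t * g t) t 1.
Proof. move=> df dg; exact: (derivableM df dg). Qed.

Lemma Sn_cst n a : Sn n (fun _ => a).
Proof. elim: n a => //= n IH a; split => [t|]; first exact: derivable_cst.
by rewrite D_cst. Qed.

Lemma Sn_add n f g : Sn n f -> Sn n g -> Sn n (fun t => f t + g t).
Proof.
elim: n f g => //= n IH f g [df Sf] [dg Sg]; split => [t|]; first exact: der_add.
rewrite D_add //; exact: IH.
Qed.

Lemma Sn_S n g : Sn n.+1 g -> Sn n g.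
Proof.
elim: n g => //= n IH g [dg [ddg S]]; split => //; exact: IH.
Qed.

Lemma Sn_mul n f g : Sn n f -> Sn n g -> Sn n (fun t => f t * g t).
Proof.
elim: n f g => //= n IH f g [df Sf] [dg Sg]; split => [t|]; first exact: der_mul.
rewrite D_mul //; apply: Sn_add; apply: IH => //; apply: Sn_S; by split.
Qed.

Lemma Sm_cst a : Sm (fun _ => a). Proof. move=> n; exact: Sn_cst. Qed.
Lemma Sm_add f g : Sm f -> Sm g -> Sm (fun t => f t + g t).
Proof. move=> Sf Sg n; exact: Sn_add. Qed.
Lemma Sm_mul f g : Sm f -> Sm g -> Sm (fun t => f t * g t).
Proof. move=> Sf Sg n; exact: Sn_mul. Qed.
Lemma Sm_der g t : Sm g -> derivable g t 1.
Proof. by move=> S; case: (S 1%N). Qed.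
Lemma Sm_D g : Sm g -> Sm (D g).
Proof. by move=> S n; case: (S n.+1). Qed.

Lemma Z_Sm k g : Z k g -> Sm g.
Proof. by case: k => //= k []. Qed.

Lemma Z_S k g : Z k.+1 g -> Z k g.
Proof.
elim: k g => [|k IH] g /=; first by case.
case=> g0 Sg [Dg0 SDg ZD]; split => //; exact: IH.
Qed.

Lemma Z_add k f g : Z k f -> Z k g -> Z k (fun t => f t + g t).
Proof.
elim: k f g => [|k IH] f g /=; first exact: Sm_add.
case=> f0 Sf Zf [g0 Sg Zg]; split; [by rewrite f0 g0 addr0|exact: Sm_add|].
rewrite D_add => [|t|t]; [exact: IH| exact: Sm_der|exact: Sm_der].
Qed.

Lemma Z_0 k : Z k (fun _ => 0).
Proof. elim: k => [|k IH] /=; first exact: Sm_cst. split=> //; first exact: Sm_cst.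
by rewrite D_cst. Qed.

Lemma Z_sum k (I : Type) (r : seq I) (P : pred I) (F : I -> R -> R) :
  (forall i, P i -> Z k (F i)) -> Z k (fun t => \sum_(i <- r | P i) F i t).
Proof.
move=> ZF; elim: r => [|i r IH].
  by under eq_fun do rewrite big_nil; exact: Z_0.
case Pi: (P i).
  under eq_fun do rewrite big_cons Pi; exact: Z_add (ZF _ Pi) IH.
by under eq_fun do rewrite big_cons Pi.
Qed.

Lemma Z_mulS k u g : Sm u -> Z k g -> Z k (fun t => u t * g t).
Proof.
elim: k u g => [|k IH] u g /=; first exact: Sm_mul.
move=> Su [g0 Sg Zg]; split; [by rewrite g0 mulr0|exact: Sm_mul|].
rewrite D_mul => [|t|t]; [|exact: Sm_der|exact: Sm_der].
apply: Z_add; first exact: IH.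
under eq_fun do rewrite mulrC.
apply: IH; first exact: Sm_D.
by apply: Z_S; split.
Qed.

Lemma Z_mul0 k u g : Sm u -> u 0 = 0 -> Z k g -> Z k.+1 (fun t => u t * g t).
Proof.
elim: k u g => [|k IH] u g Su u0.
  move=> /= Sg; split; [by rewrite u0 mul0r|exact: Sm_mul|].
  rewrite D_mul => [|t|t]; [|exact: Sm_der|exact: Sm_der].
  apply: Sm_add; apply: Sm_mul => //; exact: Sm_D.
move=> Zg; have [g0 Sg Zg'] := Zg.
split; [by rewrite u0 mul0r|exact: Sm_mul|].
rewrite D_mul => [|t|t]; [|exact: Sm_der|exact: Sm_der].
apply: Z_add; first exact: IH.
under eq_fun do rewrite mulrC.
apply: Z_mulS => //; exact: Sm_D.
Qed.
End Sm.

Section CA.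
Variable R : realType.
Variable N : nat.
Implicit Types (F : 'rV[R]_N -> R).

Definition e (j : 'I_N) : 'rV[R]_N := locked (delta_mx 0 j).
Lemma eE j (x : 'I_1) k : e j x k = (j == k)%:R.
Proof. by rewrite /e -lock mxE (ord1 x) eqxx eq_sym. Qed.

Definition CA F := forall z j s, F (z + s *: e j) = F z + s * (F (z + e j) - F z).

Lemma CA_shift F k : CA F -> CA (fun z => F (z + e k)).
Proof.
move=> H z j s /=.
by rewrite -addrA (addrC (s *: e j)) addrA H -!addrA (addrC (e k)).
Qed.

Lemma updE d (blk : 'I_N -> 'I_d) i (y z : 'rV[R]_N) (x : 'I_1) k :
  upd blk i y z x k = if blk k == i then z 0 k else y 0 k.
Proof. by rewrite /upd mxE. Qed.

Lemma CA_upd d (blk : 'I_N -> 'I_d) i w F : CA F -> CA (fun z => F (upd blk i z w)).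
Proof.
move=> H z j s /=.
have [bj|bj] := eqVneq (blk j) i.
  have E : forall s, upd blk i (z + s *: e j) w = upd blk i z w.
    move=> s'; apply/rowP => k; rewrite !updE !mxE eE.
    case: eqP => // bk; have /negbTE -> : j != k by apply/eqP => jk; subst.
    by rewrite mulr0 addr0.
  by rewrite E -(scale1r (e j)) E subrr mulr0 addr0.
have E : forall s, upd blk i (z + s *: e j) w = upd blk i z w + s *: e j.
  move=> s'; apply/rowP => k; rewrite !updE !mxE !eE.
  case: eqP => // bk; have /negbTE -> : j != k.
    by apply/eqP => jk; rewrite jk bk eqxx in bj.
  by rewrite mulr0 addr0.
by rewrite E -(scale1r (e j)) E scale1r H.
Qed.

Lemma Sm_sub (f g : R -> R) : Sm f -> Sm g -> Sm (fun t : R => f t - g t).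
Proof.
move=> Sf Sg; have -> : (fun t => f t - g t) = (fun t => f t + (-1) * g t).
  by apply/funext => t; rewrite mulN1r.
by apply: Sm_add => //; apply: Sm_mul => //; exact: Sm_cst.
Qed.

Lemma iterD_nseqS (G : R -> 'rV[R]_N) k :
  Defs.iterD (nseq k (1:R)) (fun x => 'D_1 G x) = Defs.iterD (nseq k.+1 (1:R)) G.
Proof. by elim: k => //= k ->. Qed.

Lemma coord_Sn j n (G : R -> 'rV[R]_N) :
  (forall k t, derivable (Defs.iterD (nseq k (1:R)) G) t 1) ->
  Sn n (fun t => G t 0 j).
Proof.
elim: n G => //= n IH G HG; split.
  by move=> t; move: (HG 0%N t) => /= /derivable_mxP; apply.
have -> : D (fun t => G t 0 j) = fun t => ('D_1 G t) 0 j.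
  by apply/funext => t; rewrite /D (derive_mx (HG 0%N t)) mxE.
apply: IH => k t; rewrite iterD_nseqS; exact: HG.
Qed.

Lemma coord_Sm (c : R -> 'rV[R]_N) j : smooth_on setT c -> Sm (fun t => c t 0 j).
Proof.
move=> Sc n; apply: coord_Sn => k t; exact: (Sc (nseq k 1) t I).2.
Qed.

Lemma CA_Sm (c : R -> 'rV[R]_N) F : smooth_on setT c -> CA F -> Sm (fun t => F (c t)).
Proof.
move=> Sc.
pose zk k t : 'rV[R]_N := \row_j (if (j < k)%N then c t 0 j else c 0 0 j).
suff H : forall k F, CA F -> Sm (fun t => F (zk k t)).
  move=> CF; have := H N F CF.
  have -> // : (fun t => F (zk N t)) = (fun t => F (c t)).
  apply/funext => t; congr F; apply/rowP => j; by rewrite mxE ltn_ord.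
elim=> [|k IH] G CG.
  have -> : (fun t => G (zk 0%N t)) = (fun _ => G (zk 0%N 0)).
    by apply/funext => t; congr G; apply/rowP => j; rewrite !mxE.
  exact: Sm_cst.
have [kN|kN] := ltnP k N; last first.
  have -> : (fun t => G (zk k.+1 t)) = (fun t => G (zk k t)).
    apply/funext => t; congr G; apply/rowP => j; rewrite !mxE.
    have jk : (j < k)%N := leq_trans (ltn_ord j) kN.
    by rewrite jk ltnS ltnW.
  exact: IH.
pose jk : 'I_N := Ordinal kN.
have E : forall t, zk k.+1 t = zk k t + (c t 0 jk - c 0 0 jk) *: e jk.
  move=> t; apply/rowP => j; rewrite !mxE eE.
  have [<-|jkj] := eqVneq jk j.
    by rewrite /= ltnSn ltnn mulr1 addrC subrK.
  rewrite mulr0 addr0 ltnS leq_eqVlt.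
  have /negbTE -> // : (nat_of_ord j != k).
  by apply/eqP => jk'; move/eqP: jkj; apply; apply: val_inj.
have -> : (fun t => G (zk k.+1 t)) = (fun t => G (zk k t) +
   (c t 0 jk - c 0 0 jk) * ((fun z => G (z + e jk)) (zk k t) - G (zk k t))).
  by apply/funext => t; rewrite E CG.
apply: (Sm_add (f := fun t => G (zk k t))); first exact: IH.
apply: (Sm_mul (f := fun t => c t 0 jk - c 0 0 jk)).
  by apply: (Sm_sub (f := fun t => c t 0 jk)); [exact: coord_Sm|exact: Sm_cst].
apply: (Sm_sub (f := fun t => G (zk k t + e jk))); last exact: IH.
by apply: (IH (fun z => G (z + e jk))); apply: CA_shift.
Qed.
End CA.
Arguments e {R N} j.

Section Tan.
Variable R : realType.

Lemma harm_le n k : (n <= k)%N -> k.+1%:R^-1 <= n.+1%:R^-1 :> R.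
Proof. by move=> nk; rewrite lef_pV2 ?posrE ?ltr0n // ler_nat ltnS. Qed.

Lemma cvg_by_harm (V : normedModType R) (a : nat -> V) l :
  (forall n, `|l - a n| <= n.+1%:R^-1) -> a @ \oo --> l.
Proof.
move=> H; apply/cvgrPdist_le => e e0.
have /cvgrPdist_le /(_ e e0) := @cvg_harmonic R.
apply: filterS => n /=; rewrite sub0r normrN ger0_norm ?harmonic_ge0 // => h.
exact: le_trans (H n) h.
Qed.

Lemma tangent_exists m (X : set 'rV[R]_m) : not_isolated X 0 ->
  exists2 v, tangent_cone X 0 v & v != 0.
Proof.
move=> NI.
have H n : exists z, [/\ X z, z != 0 & ball (0:'rV[R]_m) (n.+1%:R^-1) z].
  by apply: NI; apply: nbhsx_ballx; rewrite invr_gt0 ltr0n.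
case: (choice H) => xs Hxs.
pose u n := `|xs n|^-1 *: xs n.
have nu n : `|u n| = 1.
  have [_ xn0 _] := Hxs n.
  by rewrite /u normrZ normrV ?unitfE ?normr_eq0 // normr_id mulVf // normr_eq0.
pose K := closed_ball (0:'rV[R]_m) 1.
have KE : K = closed_ball_ Num.norm 0 1 by rewrite /K closed_ballE.
have cK : compact K.
  apply: bounded_closed_compact; last exact: closed_ball_closed.
  rewrite /= KE /bounded_near; near=> M; move=> x; rewrite /closed_ball_ /= sub0r normrN => /le_trans; apply.
  by near: M; apply: nbhs_pinfty_ge; rewrite num_real.
have uK n : K (u n) by rewrite KE /closed_ball_ /= sub0r normrN nu.
have Fu : (u @ \oo) K by exists 0%N => // k _; exact: uK.
have [v [_ cv]] := cK (u @ \oo) _ Fu.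
have H2 n : exists k, (n <= k)%N /\ `|v - u k| < n.+1%:R^-1.
  have FA : (u @ \oo) [set w | exists2 k, (n <= k)%N & w = u k].
    by exists n => // k /= nk; exists k.
  have NB : nbhs v (ball v (n.+1%:R^-1)).
    by apply: nbhsx_ballx; rewrite invr_gt0 ltr0n.
  have [w [[k nk ->] /= b]] := cv _ _ FA NB.
  by move: b; rewrite -ball_normE /ball_ /= => b; exists k; split.
case: (choice H2) => ph Hph.
exists v; last first.
  apply/eqP => v0; have [_ ] := Hph 0%N; rewrite v0 sub0r normrN nu.
  by rewrite invr1 ltxx.
exists (fun n => xs (ph n)), (fun n => `|xs (ph n)|); split.
- by move=> n; have [] := Hxs (ph n).
- by move=> n; have [_ ? _] := Hxs (ph n); rewrite normr_gt0.
- apply: cvg_by_harm => n; have [_ _] := Hxs (ph n).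
  rewrite -ball_normE /ball_ /= !sub0r !normrN normr_id => /ltW /le_trans; apply.
  by apply: harm_le; case: (Hph n).
- apply: cvg_by_harm => n; rewrite subr0; have [_ /ltW h] := Hph n; exact: h.
Unshelve. all: by end_near.
Qed.
End Tan.

Section Lin.
Variable R : realType.
Variables (N d : nat) (blk : 'I_N -> 'I_d).
Implicit Types (psi : 'rV[R]_N -> R) (y z w : 'rV[R]_N).

Definition linear_in i psi := forall y z1 z2 (a : R),
  psi (upd blk i y (a *: z1 + z2)) = a * psi (upd blk i y z1) + psi (upd blk i y z2).

Lemma upd_comm i i' y w w' : i != i' ->
  upd blk i (upd blk i' y w) w' = upd blk i' (upd blk i y w') w.
Proof.
move=> ne; apply/rowP => k; rewrite !updE.
case: eqP => [bk|]; case: eqP => // bk'.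
by move/eqP: ne; rewrite -bk -bk'.
Qed.

Lemma lin_zero i psi y : linear_in i psi -> psi (upd blk i y 0) = 0.
Proof.
move=> H; have := H y 0 0 1; rewrite scale1r addr0 mul1r => E.
set p := psi _ in E *; lra.
Qed.

Lemma lin_sum i psi y (r : seq 'I_N) (P : pred 'I_N) (a : 'I_N -> R) (W : 'I_N -> 'rV[R]_N) :
  linear_in i psi ->
  psi (upd blk i y (\sum_(j <- r | P j) a j *: W j)) =
  \sum_(j <- r | P j) a j * psi (upd blk i y (W j)).
Proof.
move=> H; apply: (big_rec2 (fun x s => psi (upd blk i y x) = s)).
  exact: lin_zero.
by move=> j x s _ <-; rewrite H.
Qed.

Lemma lin_expand i psi z : linear_in i psi ->
  psi z = \sum_(j | blk j == i) z 0 j * psi (upd blk i z (e j)).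
Proof.
move=> H.
have Ez : z = upd blk i z (\sum_(j | blk j == i) z 0 j *: e j).
  apply/rowP => k; rewrite updE; case: ifP => bk //.
  rewrite summxE (bigD1 k) //= big1 ?addr0.
    by rewrite !mxE eE eqxx mulr1.
  move=> j /andP[_ jk]; rewrite !mxE eE (negbTE jk) mulr0 //.
transitivity (psi (upd blk i z (\sum_(j | blk j == i) z 0 j *: e j))).
  by congr psi.
exact: (lin_sum z (index_enum _) (fun j => blk j == i) (fun j => z 0 j) e H).
Qed.

Lemma lin_upd i i' psi w : linear_in i' psi -> i != i' ->
  linear_in i' (fun z => psi (upd blk i z w)).
Proof.
move=> H ne y z1 z2 a /=; rewrite !(@upd_comm i i') //; exact: H.
Qed.

Lemma CA_of_lin psi : (forall i, linear_in i psi) -> CA psi.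
Proof.
move=> H z j s.
have E s' : z + s' *: e j = upd blk (blk j) z (s' *: e j + z).
  apply/rowP => k; rewrite updE !mxE eE.
  case: (eqVneq (blk k) (blk j)) => bk; first by rewrite addrC.
  have /negbTE -> : j != k by apply/eqP => jk; move/eqP: bk; rewrite jk.
  by rewrite mulr0 addr0.
have Ez : upd blk (blk j) z z = z by apply/rowP => k; rewrite updE if_same.
have E2 : z + e j = upd blk (blk j) z (1 *: e j + z) by rewrite -E scale1r.
rewrite E E2 !H Ez.
by rewrite mul1r addrK addrC.
Qed.

Lemma phi_lin m (phi : 'rV[R]_N -> 'rV[R]_m) (a0 : R) (k0 : 'I_m) i :
  multilinear blk phi -> linear_in i (fun z => a0 * phi z 0 k0).
Proof.
move=> H y z1 z2 a /=; rewrite H !mxE.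
by rewrite mulrDr mulrCA.
Qed.

Lemma Z_step k i (c : R -> 'rV[R]_N) psi :
  smooth_on setT c -> block_zero blk (c 0) i -> linear_in i psi ->
  (forall j, blk j == i -> Z k (fun t => psi (upd blk i (c t) (e j)))) ->
  Z k.+1 (fun t => psi (c t)).
Proof.
move=> Sc bz H HZ.
have -> : (fun t => psi (c t)) =
  (fun t => \sum_(j | blk j == i) c t 0 j * psi (upd blk i (c t) (e j))).
  by apply/funext => t; exact: lin_expand.
apply: Z_sum => j bj; apply: Z_mul0; [exact: coord_Sm| |exact: HZ].
by move/forallP: bz => /(_ j) /implyP /(_ bj) /eqP.
Qed.
End Lin.

Section Fn.
Variable R : realType.
Variable m : nat.
Variables (c0 : R) (k0 : 'I_m).
Definition fl (x : 'rV[R]_m) : R := c0 * x 0 k0.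

Lemma fl_diff x : differentiable fl x.
Proof.
have := differentiableM (differentiable_cst c0 x) (differentiable_coord x 0 k0).
exact.
Qed.

Lemma fl_D x w : 'D_w fl x = c0 * w 0 k0.
Proof.
have dc : derivable (fun x : 'rV[R]_m => x 0 k0) x w.
  by move: (@derivable_id _ _ x w) => /derivable_mxP; apply.
have Dc : 'D_w (fun x : 'rV[R]_m => x 0 k0) x = w 0 k0.
  have := derive_mx (@derivable_id _ _ x w); rewrite derive_id => /matrixP/(_ 0 k0).
  by rewrite mxE => h; exact: esym h.
transitivity ('D_w (c0 \*: (fun x : 'rV[R]_m => x 0 k0)) x) => //.
by rewrite deriveZ // Dc.
Qed.

Lemma fl_twice : twice_differentiable fl.
Proof.
split; first exact: fl_diff.
move=> w x; have -> : 'D_w fl = cst (c0 * w 0 k0).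
  by apply/funext => z; rewrite fl_D.
exact: differentiable_cst.
Qed.

Lemma fl_d v : 'd fl 0 v = c0 * v 0 k0.
Proof. by rewrite -deriveE ?fl_D //; exact: fl_diff. Qed.
End Fn.

Lemma derive1D (R : realType) (g : R -> R) : derive1 g = D g.
Proof. by apply/funext => t; rewrite derive1E. Qed.

Unset Implicit Arguments.
Set Strict Implicit.

Theorem proposition5p1 (R : realType) (d N m : nat) (blk : 'I_N -> 'I_d)
  (M : set 'rV[R]_N) (phi : 'rV[R]_N -> 'rV[R]_m) (y : 'rV[R]_N) :
  embedded_submanifold M ->
  multilinear blk phi ->
  M y ->
  (3 <= #|[pred i : 'I_d | block_zero blk y i]|)%N ->
  not_isolated (phi @` M) 0 ->
  ~ two_implies_one phi M y.
Proof.
move=> _ Hml My Hcard NI T21.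
set P := [pred i : 'I_d | block_zero blk y i] in Hcard.
have [i1 Pi1] : exists i1, i1 \in P.
  by apply/card_gt0P; apply: leq_trans Hcard.
have [i2 Pi2] : exists i2, i2 \in [predD1 P & i1].
  apply/card_gt0P; move: Hcard; rewrite (cardD1 i1 P) Pi1 add1n ltnS.
  by apply: leq_trans.
have [i3 Pi3] : exists i3, i3 \in [predD1 [predD1 P & i1] & i2].
  apply/card_gt0P; move: Hcard; rewrite (cardD1 i1 P) Pi1 add1n ltnS.
  by rewrite (cardD1 i2 [predD1 P & i1]) Pi2 add1n ltnS.
move: Pi2 Pi3; rewrite !inE => /andP[n21 Pi2] /andP[n32 /andP[n31 Pi3]].
have phiy0 : phi y = 0.
  have E : upd blk i1 y 0 = y.
    apply/rowP => k; rewrite updE mxE; case: ifP => // /eqP bk.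
    by move: Pi1; rewrite inE => /forallP/(_ k)/implyP; rewrite bk eqxx => /(_ isT)/eqP.
  have := Hml i1 y 0 0 1; rewrite scale1r addr0 E => hh.
  by have := congr1 (fun q => q - phi y) hh; rewrite subrr addrK scale1r => <-.
have [v tv v0] := tangent_exists NI.
have [k0 vk0] : exists k0, v 0 k0 != 0.
  case: (pselect (exists k0, v 0 k0 != 0)) => // H; exfalso.
  move/eqP: v0; apply; apply/rowP => k; rewrite mxE.
  by case: (eqVneq (v 0 k) 0) => // h; exfalso; apply: H; exists k.
pose c0 := - v 0 k0.
have LF i : linear_in blk i (fun z => c0 * phi z 0 k0) by exact: phi_lin.
have Hst : stationary (fl c0 k0) (phi @` M) (phi y).
  apply: (T21 (fl c0 k0) (fl_twice c0 k0)).
  move=> c Sc _ cy.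
  have bz i : i \in P -> block_zero blk (c 0) i by rewrite cy inE.
  have Z3 : Z 3 (fun t => c0 * phi (c t) 0 k0).
    apply: (Z_step (psi := fun z => c0 * phi z 0 k0) Sc (bz _ Pi1) (LF i1)) => j1 _.
    apply: (Z_step (psi := fun z => c0 * phi (upd blk i1 z (e j1)) 0 k0) Sc (bz _ Pi2)).
      by apply: (lin_upd (psi := fun z => c0 * phi z 0 k0)); rewrite // eq_sym.
    move=> j2 _.
    apply: (Z_step (psi := fun z => c0 * phi (upd blk i1 (upd blk i2 z (e j2)) (e j1)) 0 k0) Sc (bz _ Pi3)).
      apply: (lin_upd (psi := fun z => c0 * phi (upd blk i1 z (e j1)) 0 k0)); last by rewrite eq_sym.
      by apply: (lin_upd (psi := fun z => c0 * phi z 0 k0)); rewrite // eq_sym.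
    move=> j3 _ /=.
    apply: (CA_Sm (F := fun z => c0 * phi (upd blk i1 (upd blk i2 (upd blk i3 z (e j3)) (e j2)) (e j1)) 0 k0) Sc).
    apply: (@CA_upd R N d blk i3 (e j3) (fun z => c0 * phi (upd blk i1 (upd blk i2 z (e j2)) (e j1)) 0 k0)).
    apply: (@CA_upd R N d blk i2 (e j2) (fun z => c0 * phi (upd blk i1 z (e j1)) 0 k0)).
    apply: (@CA_upd R N d blk i1 (e j1) (fun z => c0 * phi z 0 k0)).
    exact: CA_of_lin.
  case: Z3 => _ _ [Dh0 _ [DDh0 _ _]].
  change (derive1 (fun t => c0 * phi (c t) 0 k0) 0 = 0 /\
          0 <= derive1 (derive1 (fun t => c0 * phi (c t) 0 k0)) 0).
  by rewrite !derive1D Dh0 DDh0.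
have := Hst v; rewrite phiy0 => /(_ tv).
  rewrite fl_d /c0 mulNr -expr2 oppr_ge0 leNgt.
  by move/negP; apply; rewrite lt_def sqrf_eq0 vk0 sqr_ge0.
Qed.
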